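(* Consider a seller with one item and a single ex-post rational buyer. The item's quality $q\in Q=[q_1,q_2]$ is drawn from a distribution with CDF $G$ and density $g$, observed only by the seller; the buyer's valuation is $v(q)$ with $v:Q\to\mathbb{R}^+$ monotone increasing with inverse $v^{-1}$. A fixed-price signaling mechanism is a pair $(\pi,p)$ where $\pi:Q\to[0,1]$ gives the probability of sending signal $1$ (''buy'') when the quality is $q$ (signal $0$, ''not buy'', is sent with probability $1-\pi(q)$), and $p$ is a fixed price. The mechanism is obedient for the ex-post rational buyer if $\int_{q_1}^{v^{-1}(p)}\pi(q)g(q)\,\mathrm{d}q=0$ and $\int_{v^{-1}(p)}^{q_2}[1-\pi(q)]g(q)\,\mathrm{d}q=0$. The seller's revenue is $Rev_{sig}(\pi,p)=p\int_Q\pi(q)g(q)\,\mathrm{d}q$. Then the mechanism $(\pi^*,p^* )$ with $p^*\in\arg\max_p[1-G(v^{-1}(p))]\cdot p$ and $\pi^*(q)=0$ if $q<v^{-1}(p^* )$, $\pi^*(q)=1$ otherwise, is an optimal (revenue-maximizing) obedient fixed-price signaling mechanism.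
   Context: An ex-post rational buyer buys if and only if his valuation $v(q)$ at the realized quality is at least $p$; obedience means that after signal 1 the buyer is (almost surely) willing to buy and after signal 0 he is (almost surely) not willing to buy, which the paper expresses by the two integral conditions above. Optimality is over all obedient pairs $(\pi,p)$. *)

(* Defs.v *)
From HB Require Import structures.
From mathcomp Require Import all_boot all_order all_algebra.
From mathcomp Require Import all_classical all_reals all_analysis.
Set Implicit Arguments. Unset Strict Implicit. Unset Printing Implicit Defensive.
Import Order.TTheory GRing.Theory Num.Theory.
Local Open Scope classical_set_scope.
Local Open Scope ring_scope.

Section Mech.
Variable R : realType.
Notation mu := (@lebesgue_measure R).

Definition Qset (q1 q2 : R) : set R := `[q1, q2]%classic.

(* qualities at which the ex-post rational buyer is NOT willing to buy at price p,
   i.e. {q in Q | v q < p} = {q in Q | q < v^{-1}(p)} *)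
Definition below_set (v : R -> R) (q1 q2 p : R) : set R :=
  Qset q1 q2 `&` [set q | v q < p].

Definition above_set (v : R -> R) (q1 q2 p : R) : set R :=
  Qset q1 q2 `&` [set q | p <= v q].

Definition obedient (g v : R -> R) (q1 q2 : R) (pi : R -> R) (p : R) : Prop :=
  (\int[mu]_(q in below_set v q1 q2 p) (pi q * g q)%:E = 0)%E /\
  (\int[mu]_(q in above_set v q1 q2 p) ((1 - pi q) * g q)%:E = 0)%E.

Definition rev_sig (g : R -> R) (q1 q2 : R) (pi : R -> R) (p : R) : \bar R :=
  (p%:E * \int[mu]_(q in Qset q1 q2) (pi q * g q)%:E)%E.

(* 1 - G(v^{-1}(p)) : probability that the quality is at least v^{-1}(p) *)
Definition sale_prob (g v : R -> R) (q1 q2 p : R) : \bar R :=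
  (\int[mu]_(q in above_set v q1 q2 p) (g q)%:E)%E.

Definition pi_star (v : R -> R) (pstar : R) : R -> R :=
  fun q => if v q < pstar then 0 else 1.

End Mech.

(* Main.v *)
Require Import Defs.
From HB Require Import structures.
From mathcomp Require Import all_boot all_order all_algebra.
From mathcomp Require Import all_classical all_reals all_analysis.
From mathcomp Require Import measurable_realfun.
Import Order.TTheory GRing.Theory Num.Theory.
Local Open Scope classical_set_scope.
Local Open Scope ring_scope.

Section S0.
Variables (R : realType) (q1 q2 : R) (v : R -> R).
Hypothesis vmono : {in Qset q1 q2 &, {mono v : x y / x < y}}.

Lemma meas_below p : measurable (below_set v q1 q2 p).
Proof.
apply: is_interval_measurable => x y [Qx vx] [Qy vy] z /andP[xz zy].
have Qz : Qset q1 q2 z.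
  move: Qx Qy; rewrite /Qset /= !in_itv /= => /andP[? ?] /andP[? ?].
  apply/andP; split; [exact: le_trans xz|exact: le_trans zy _].
split => //=; move: zy; rewrite le_eqVlt => /orP[/eqP->//|zy].
rewrite /= in vy; apply: lt_trans vy.
by rewrite vmono ?inE.
Qed.

Lemma meas_above p : measurable (above_set v q1 q2 p).
Proof.
apply: is_interval_measurable => x y [Qx vx] [Qy vy] z /andP[xz zy].
have Qz : Qset q1 q2 z.
  move: Qx Qy; rewrite /Qset /= !in_itv /= => /andP[? ?] /andP[? ?].
  apply/andP; split; [exact: le_trans xz|exact: le_trans zy _].
split => //=; move: xz; rewrite le_eqVlt => /orP[/eqP<-//|xz].
rewrite /= in vx; apply: (le_trans vx); apply/ltW.
by rewrite vmono ?inE.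
Qed.

Lemma Q_split p : Qset q1 q2 = below_set v q1 q2 p `|` above_set v q1 q2 p.
Proof.
rewrite /below_set /above_set -setIUr.
rewrite (_ : [set q | v q < p] `|` [set q | p <= v q] = setT) ?setIT//.
by apply/seteqP; split => x //= _; case: (ltP (v x) p); [left|right].
Qed.

Lemma Q_disj p : [disjoint below_set v q1 q2 p & above_set v q1 q2 p].
Proof.
apply/disj_setPS => x [[_ h1] [_ h2]].
by move: (lt_le_trans h1 h2); rewrite ltxx.
Qed.

Variable g : R -> R.
Hypothesis mg : measurable_fun (Qset q1 q2) g.
Hypothesis g0 : forall q, Qset q1 q2 q -> 0 <= g q.

Lemma key (pi : R -> R) p :
  measurable_fun (Qset q1 q2) pi ->
  (forall q, Qset q1 q2 q -> 0 <= pi q <= 1) ->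
  obedient g v q1 q2 pi p ->
  (\int[@lebesgue_measure R]_(q in Qset q1 q2) (pi q * g q)%:E = sale_prob g v q1 q2 p)%E.
Proof.
move=> mpi pi01 [ob1 ob2].
have mQ : measurable (Qset q1 q2) by exact: measurable_itv.
have mf1 : measurable_fun (Qset q1 q2) (fun q => (pi q * g q)%:E).
  by apply/measurable_EFinP; exact: measurable_funM.
have mf2 : measurable_fun (Qset q1 q2) (fun q => ((1 - pi q) * g q)%:E).
  apply/measurable_EFinP; apply: measurable_funM => //.
  by apply: measurable_funB => //; exact: measurable_cst.
have sA : above_set v q1 q2 p `<=` Qset q1 q2 by move=> x [].
rewrite (Q_split p) ge0_integral_setU.
- rewrite ob1 add0e /sale_prob.
  transitivity (\int[@lebesgue_measure R]_(q in above_set v q1 q2 p)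
     ((pi q * g q)%:E + ((1 - pi q) * g q)%:E))%E.
    rewrite ge0_integralD ?ob2 ?adde0 //.
    - exact: meas_above.
    - by move=> x [Qx _]; rewrite lee_fin mulr_ge0 ?g0 //; case/andP: (pi01 x Qx).
    - exact: measurable_funS mf1.
    - by move=> x [Qx _]; rewrite lee_fin mulr_ge0 ?g0 ?subr_ge0 //; case/andP: (pi01 x Qx).
    - exact: measurable_funS mf2.
  by apply: eq_integral => x _; rewrite -EFinD -mulrDl addrCA subrr addr0 mul1r.
- exact: meas_below.
- exact: meas_above.
- by rewrite -Q_split.
- by rewrite -Q_split => x Qx; rewrite lee_fin mulr_ge0 ?g0 //; case/andP: (pi01 x Qx).
- exact: Q_disj.
Qed.

End S0.

Theorem mainTheorem3 (R : realType) (q1 q2 : R) (g v : R -> R) (pstar : R) :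
  q1 < q2 ->
  (* g is a probability density on Q = [q1, q2] *)
  measurable_fun (Qset q1 q2) g ->
  (forall q, Qset q1 q2 q -> 0 <= g q) ->
  (\int[@lebesgue_measure R]_(q in Qset q1 q2) (g q)%:E = 1)%E ->
  (* v : Q -> R^+ is (strictly) increasing, hence invertible *)
  (forall q, Qset q1 q2 q -> 0 <= v q) ->
  {in Qset q1 q2 &, {mono v : x y / x < y}} ->
  (* pstar maximizes [1 - G(v^{-1}(p))] * p *)
  (forall p : R, (sale_prob g v q1 q2 p * p%:E <=
                  sale_prob g v q1 q2 pstar * pstar%:E)%E) ->
  (* (pi_star, pstar) is obedient, and optimal among obedient mechanisms *)
  obedient g v q1 q2 (pi_star v pstar) pstar /\
  forall (pi : R -> R) (p : R),
    measurable_fun (Qset q1 q2) pi ->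
    (forall q, Qset q1 q2 q -> 0 <= pi q <= 1) ->
    obedient g v q1 q2 pi p ->
    (rev_sig g q1 q2 pi p <= rev_sig g q1 q2 (pi_star v pstar) pstar)%E.
Proof.
move=> _ mg g0 _ _ vmono hopt.
have obs : obedient g v q1 q2 (pi_star v pstar) pstar.
  split; apply: integral0_eq => x [_ /= hx]; rewrite /pi_star.
  - by rewrite hx mul0r.
  - by rewrite ltNge hx /= subrr mul0r.
split => // pi p mpi pi01 ob.
have mps : measurable_fun (Qset q1 q2) (pi_star v pstar).
  apply: (@eq_measurable_fun _ _ _ _ _ (\1_(above_set v q1 q2 pstar) : R -> R)); last first.
    by apply: measurable_indic; exact: (@meas_above R q1 q2 v vmono pstar).
  move=> x; rewrite inE => Qx; rewrite /pi_star indicE.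
  case: ltP => h.
    by rewrite memNset //; case => _ /=; rewrite leNgt h.
  by rewrite mem_set.
have ps01 : forall q, Qset q1 q2 q -> 0 <= pi_star v pstar q <= 1.
  by move=> q _; rewrite /pi_star; case: ifP => _; rewrite ?lexx ?ler01.
rewrite /rev_sig (@key R q1 q2 v vmono g mg g0 _ _ mpi pi01 ob) (@key R q1 q2 v vmono g mg g0 _ _ mps ps01 obs).
by rewrite muleC [X in (_ <= X)%E]muleC.
Qed.
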